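(* Let $2<p<6$. Then $\mathsf N(1,p)=1$ and the function $\theta\mapsto\mathsf N(\theta,p)$ is decreasing on $(\vartheta(p,2),1]$.
   Context: $\vartheta(p,2)=\frac{p-2}{p}$. For $\theta\in(\vartheta(p,2),1]$ let $q^*(\theta,p)=\frac{2p\theta}{2-p(1-\theta)}$ and, for $\theta\in(0,1]$, $p>2$, $\Lambda>0$, $\mathsf K^*_{\rm CKN}(\theta,p,\Lambda)=\big[\tfrac{2p\theta+2-p}{(p-2)^2}\big]^{\frac{p-2}{2p}}\big[\tfrac{2p\theta}{2p\theta+2-p}\big]^{\theta}\big[\tfrac{p+2}{4}\big]^{\frac{6-p}{2p}}\Big[\tfrac{\sqrt\pi\,\Gamma(\frac2{p-2})}{\Gamma(\frac2{p-2}+\frac12)}\Big]^{\frac{p-2}{p}}\Lambda^{\theta-\frac{p-2}{2p}}$. Define $\mathsf N(\theta,p)=\mathsf K^*_{\rm CKN}(\theta,p,1)^{1/\theta}\big/\mathsf K^*_{\rm CKN}(1,q^*(\theta,p),1)$. *)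

(* Defs.v *)
From Stdlib Require Import Reals.
From Coquelicot Require Import Coquelicot.
Open Scope R_scope.

Definition Gamma (x : R) : R :=
  RInt_gen (fun t => Rpower t (x - 1) * exp (- t)) (at_right 0) (Rbar_locally p_infty).

Definition vartheta2 (p : R) : R := (p - 2) / p.

Definition qstar (theta p : R) : R := 2 * p * theta / (2 - p * (1 - theta)).

(* K^*_CKN(theta,p,Lambda); real powers a^b written Rpower a b (all bases
   are positive in the relevant range). *)
Definition KstarCKN (theta p Lambda : R) : R :=
  Rpower ((2 * p * theta + 2 - p) / (p - 2) ^ 2) ((p - 2) / (2 * p))
  * Rpower (2 * p * theta / (2 * p * theta + 2 - p)) theta
  * Rpower ((p + 2) / 4) ((6 - p) / (2 * p))
  * Rpower (sqrt PI * Gamma (2 / (p - 2)) / Gamma (2 / (p - 2) + 1 / 2)) ((p - 2) / p)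
  * Rpower Lambda (theta - (p - 2) / (2 * p)).

Definition Nfun (theta p : R) : R :=
  Rpower (KstarCKN theta p 1) (1 / theta) / KstarCKN 1 (qstar theta p) 1.

(* Main.v *)
Require Import Defs.
From Stdlib Require Import Reals.
From Coquelicot Require Import Coquelicot.
From Stdlib Require Import Lra Lia Psatz.
Open Scope R_scope.


Definition gf (x t : R) : R := Rpower t (x - 1) * exp (- t).

Lemma ln_le_sub1 w : 0 < w -> ln w <= w - 1.
Proof. intros. pose proof (exp_ineq1_le (ln w)). rewrite exp_ln in H0; lra. Qed.

Lemma exp_le_mono a b : a <= b -> exp a <= exp b.
Proof. intros [H|H]; [left; apply exp_increasing; auto | subst; lra]. Qed.

Lemma gf_pos x t : 0 < gf x t.
Proof. unfold gf, Rpower. apply Rmult_lt_0_compat; apply exp_pos. Qed.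

Lemma gf_ex_derive x t : 0 < t -> ex_derive (gf x) t.
Proof. intros. unfold gf, Rpower. auto_derive. lra. Qed.

Lemma gf_cont x t : 0 < t -> continuous (gf x) t.
Proof. intros; apply (ex_derive_continuous (gf x)), gf_ex_derive; auto. Qed.

Lemma gf_exRInt x a b : 0 < a -> 0 < b -> ex_RInt (gf x) a b.
Proof. intros. apply (ex_RInt_continuous (V:=R_CompleteNormedModule)). intros z Hz. apply gf_cont.
  assert (0 < Rmin a b) by (apply Rmin_glb_lt; auto). lra. Qed.

Definition Cst (m : R) := exp (Rabs m * (ln (2 * Rabs m + 1) - 1)).

Lemma Cst_pos m : 0 < Cst m.
Proof. apply exp_pos. Qed.

Lemma bound_inf m t : 1 <= t -> Rpower t m * exp (- t) <= Cst m * exp (- t / 2).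
Proof.
  intros Ht. unfold Rpower, Cst. rewrite <- !exp_plus. apply exp_le_mono.
  set (A := Rabs m). set (s := 2 * A + 1).
  assert (HA : 0 <= A) by apply Rabs_pos.
  assert (Hs : 0 < s) by (unfold s; lra).
  assert (HL : 0 <= ln t) by (rewrite <- ln_1; apply ln_le; lra).
  assert (H1 : ln t - ln s <= t / s - 1).
  { rewrite <- ln_div by lra. apply ln_le_sub1. apply Rdiv_lt_0_compat; lra. }
  assert (H2 : m * ln t <= A * ln t) by (apply Rmult_le_compat_r; auto; apply Rle_abs).
  assert (H3 : A * (t / s) <= t / 2).
  { unfold Rdiv. apply Rmult_le_reg_r with s; auto.
    replace (A * (t * / s) * s) with (A * t) by (field; lra).
    unfold s. nra. }
  assert (H4 : A * ln t <= A * (t / s) + A * (ln s - 1)) by nra.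
  lra.
Qed.

Lemma is_RInt_expo C u v :
  is_RInt (fun t => C * exp (- t / 2)) u v (2 * C * (exp (- u / 2) - exp (- v / 2))).
Proof.
  replace (2 * C * (exp (- u / 2) - exp (- v / 2))) with
    (minus ((fun t => -2 * C * exp (- t / 2)) v) ((fun t => -2 * C * exp (- t / 2)) u))
    by (unfold minus, plus, opp; simpl; ring).
  apply (is_RInt_derive (V:=R_CompleteNormedModule) (fun t => -2 * C * exp (- t / 2))).
  - intros x _. auto_derive; auto. replace (- x * / 2) with (- x / 2) by (unfold Rdiv; ring). field.
  - intros x _. apply (ex_derive_continuous (K:=R_AbsRing) (V:=R_NormedModule)). auto_derive. auto.
Qed.

Lemma Rpower_m1 t y : 0 < t -> Rpower t (y - 1) = Rpower t y / t.
Proof.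
  intros. unfold Rpower. replace ((y - 1) * ln t) with (y * ln t + - ln t) by ring.
  rewrite exp_plus, exp_Ropp, exp_ln by auto. field. lra.
Qed.

Lemma is_RInt_pow x u v : 0 < x -> 0 < u -> 0 < v ->
  is_RInt (fun t => Rpower t (x - 1)) u v ((Rpower v x - Rpower u x) / x).
Proof.
  intros Hx Hu Hv.
  replace ((Rpower v x - Rpower u x) / x) with
    (minus ((fun t => Rpower t x / x) v) ((fun t => Rpower t x / x) u))
    by (unfold minus, plus, opp; simpl; field; lra).
  assert (Hm : 0 < Rmin u v) by (apply Rmin_glb_lt; auto).
  apply (is_RInt_derive (V:=R_CompleteNormedModule) (fun t => Rpower t x / x)).
  - intros t Ht. assert (0 < t) by lra.
    unfold Rpower. auto_derive; [lra|].
    pose proof (Rpower_m1 t x H). unfold Rpower in H0. rewrite H0. field. split; lra.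
  - intros t Ht. assert (0 < t) by lra. apply (ex_derive_continuous (K:=R_AbsRing) (V:=R_NormedModule)).
    unfold Rpower. auto_derive. lra.
Qed.


Lemma Rsub_add_l (a b : R) : a + b - a = b. Proof. ring. Qed.
Lemma Rsub_add_r2 (a b : R) : b - (a + b) = - a. Proof. ring. Qed.
Lemma Rplus_plus (a b : R) : plus a b = a + b. Proof. reflexivity. Qed.

Lemma Chasles_R (f : R -> R) a b c : ex_RInt f a b -> ex_RInt f b c -> RInt f a b + RInt f b c = RInt f a c.
Proof. intros. apply (RInt_Chasles f a b c); auto. Qed.

Lemma tail_bound x u v : 1 <= u <= v ->
  0 <= RInt (gf x) u v <= 2 * Cst (x - 1) * (exp (- u / 2) - exp (- v / 2)).
Proof.
  intros Huv. split.
  - apply RInt_ge_0; try lra. apply gf_exRInt; lra.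
    intros; left; apply gf_pos.
  - rewrite <- (is_RInt_unique _ _ _ _ (is_RInt_expo (Cst (x - 1)) u v)).
    apply RInt_le; try lra. apply gf_exRInt; lra.
    eexists; apply is_RInt_expo.
    intros t Ht. unfold gf. apply bound_inf. lra.
Qed.

Lemma head_bound x a a' : 0 < x -> 0 < a <= a' ->
  0 <= RInt (gf x) a a' <= (Rpower a' x - Rpower a x) / x.
Proof.
  intros Hx Ha. split.
  - apply RInt_ge_0; try lra. apply gf_exRInt; lra.
    intros; left; apply gf_pos.
  - rewrite <- (is_RInt_unique _ _ _ _ (is_RInt_pow x a a' Hx ltac:(lra) ltac:(lra))).
    apply RInt_le; try lra. apply gf_exRInt; lra.
    eexists; apply is_RInt_pow; lra.
    intros t Ht. unfold gf.
    pose proof (exp_pos (t - 1)). unfold Rpower.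
    assert (exp (- t) <= 1).
    { rewrite <- exp_0. apply exp_le_mono. lra. }
    pose proof (exp_pos ((x - 1) * ln t)). nra.
Qed.

Lemma Rpower_pos a b : 0 < Rpower a b.
Proof. apply exp_pos. Qed.

Lemma upper_lim x : exists l, filterlim (fun b => RInt (gf x) 1 b) (Rbar_locally p_infty) (locally l).
Proof.
  apply (filterlim_locally_cauchy (F := Rbar_locally p_infty)).
  intros eps. set (C := Cst (x - 1)).
  assert (HC : 0 < C) by apply Cst_pos.
  pose proof (cond_pos eps) as He.
  exists (fun b => 1 <= b /\ 2 * C * exp (- b / 2) < eps). split.
  - exists (Rmax 1 (-2 * ln (eps / (2 * C)))). intros b Hb.
    pose proof (Rmax_l 1 (-2 * ln (eps / (2 * C)))).
    pose proof (Rmax_r 1 (-2 * ln (eps / (2 * C)))).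
    split; [lra|].
    assert (exp (- b / 2) < eps / (2 * C)).
    { rewrite <- (exp_ln (eps / (2 * C))) by (apply Rdiv_lt_0_compat; lra).
      apply exp_increasing. lra. }
    apply Rmult_lt_compat_l with (r := 2 * C) in H1; [|lra].
    replace (2 * C * (eps / (2 * C))) with (pos eps) in H1 by (field; lra). lra.
  - assert (key : forall u v, 1 <= u <= v -> 2 * C * exp (- u / 2) < eps ->
              Rabs (RInt (gf x) 1 v - RInt (gf x) 1 u) < eps).
    { intros u v Huv Hu.
      rewrite <- (Chasles_R (gf x) 1 u v) by (apply gf_exRInt; lra).
      rewrite (Rsub_add_l (RInt (gf x) 1 u) (RInt (gf x) u v)).
      pose proof (tail_bound x u v Huv). pose proof (exp_pos (- v / 2)).
      rewrite Rabs_pos_eq by lra. unfold C in *. assert (2 * Cst (x - 1) * (exp (- u / 2) - exp (- v / 2)) < 2 * Cst (x - 1) * exp (- u / 2)) by nra. lra. }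
    intros u v [Hu Hu'] [Hv Hv']. change (Rabs (RInt (gf x) 1 v - RInt (gf x) 1 u) < eps).
    destruct (Rle_lt_dec u v).
    + apply key; auto.
    + rewrite Rabs_minus_sym. apply key; auto. lra.
Qed.

Lemma lower_lim x : 0 < x -> exists l, filterlim (fun a => RInt (gf x) a 1) (at_right 0) (locally l).
Proof.
  intros Hx.
  apply (filterlim_locally_cauchy (F := at_right 0)).
  intros eps. pose proof (cond_pos eps) as He.
  exists (fun a => 0 < a <= 1 /\ Rpower a x / x < eps). split.
  - assert (Hd : 0 < Rmin 1 (Rpower (eps * x) (/ x))).
    { apply Rmin_glb_lt; [lra | apply Rpower_pos]. }
    exists (mkposreal _ Hd). intros y Hy Hy0. simpl in Hy.
    change (Rabs (y - 0) < Rmin 1 (Rpower (eps * x) (/ x))) in Hy.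
    rewrite Rminus_0_r, Rabs_pos_eq in Hy by lra.
    pose proof (Rmin_l 1 (Rpower (eps * x) (/ x))).
    pose proof (Rmin_r 1 (Rpower (eps * x) (/ x))).
    split; [lra|].
    assert (Rpower y x < Rpower (Rpower (eps * x) (/ x)) x).
    { apply Rlt_Rpower_l; auto. lra. }
    rewrite Rpower_mult in H1. replace (/ x * x) with 1 in H1 by (field; lra).
    rewrite Rpower_1 in H1 by nra.
    apply Rmult_lt_reg_r with x; auto. unfold Rdiv. rewrite Rmult_assoc, Rinv_l by lra. lra.
  - assert (key : forall u v, 0 < u <= v -> v <= 1 -> Rpower v x / x < eps ->
              Rabs (RInt (gf x) v 1 - RInt (gf x) u 1) < eps).
    { intros u v Huv Hv1 Hv.
      rewrite <- (Chasles_R (gf x) u v 1) by (apply gf_exRInt; lra).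
      rewrite (Rsub_add_r2 (RInt (gf x) u v) (RInt (gf x) v 1)).
      pose proof (head_bound x u v Hx Huv).
      pose proof (Rpower_pos u x).
      assert (Rpower u x / x > 0) by (apply Rdiv_lt_0_compat; auto).
      rewrite Rabs_Ropp, Rabs_pos_eq by lra.
      unfold Rdiv in *. lra. }
    intros u v [Hu Hu'] [Hv Hv']. change (Rabs (RInt (gf x) v 1 - RInt (gf x) u 1) < eps).
    destruct (Rle_lt_dec u v).
    + apply key; auto; lra.
    + rewrite Rabs_minus_sym. apply key; auto; lra.
Qed.


Lemma upper_gen (f : R -> R) c l : (forall b, c <= b -> ex_RInt f c b) ->
  filterlim (fun b => RInt f c b) (Rbar_locally p_infty) (locally l) ->
  is_RInt_gen f (at_point c) (Rbar_locally p_infty) l.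
Proof.
  intros Hex Hl P HP. unfold filtermapi.
  apply Filter_prod with (Q := fun a => a = c) (R := fun b => c <= b /\ P (RInt f c b)).
  - reflexivity.
  - apply filter_and. exists c. intros; lra. apply Hl. auto.
  - intros a b -> [Hb HPb]. exists (RInt f c b). split; auto.
    apply (RInt_correct (V:=R_CompleteNormedModule)). apply Hex; auto.
Qed.

Lemma lower_gen (f : R -> R) c l : 0 < c -> (forall a, 0 < a <= c -> ex_RInt f a c) ->
  filterlim (fun a => RInt f a c) (at_right 0) (locally l) ->
  is_RInt_gen f (at_right 0) (at_point c) l.
Proof.
  intros Hc Hex Hl P HP. unfold filtermapi.
  apply Filter_prod with (Q := fun a => 0 < a <= c /\ P (RInt f a c)) (R := fun b => b = c).
  - apply filter_and.
    + exists (mkposreal c Hc). intros y Hy Hy0. simpl in Hy.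
      change (Rabs (y - 0) < c) in Hy. rewrite Rminus_0_r, Rabs_pos_eq in Hy by lra. lra.
    + apply Hl. auto.
  - reflexivity.
  - intros a b [Ha HPa] ->. exists (RInt f a c). split; auto.
    apply (RInt_correct (V:=R_CompleteNormedModule)). apply Hex; auto.
Qed.

Lemma lim_ge {F : (R -> Prop) -> Prop} {FF : ProperFilter F} (g : R -> R) l c :
  filterlim g F (locally l) -> F (fun y => c <= g y) -> c <= l.
Proof.
  intros Hl Hc. destruct (Rle_lt_dec c l) as [h|h]; auto. exfalso.
  assert (He : 0 < c - l) by lra.
  pose proof (proj1 (filterlim_locally g l) Hl (mkposreal _ He)) as H1.
  destruct (filter_ex _ (filter_and _ _ H1 Hc)) as [y [Hy1 Hy2]].
  change (Rabs (g y - l) < c - l) in Hy1. apply Rabs_def2 in Hy1. lra.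
Qed.

Lemma at_right_pos : at_right 0 (fun a => 0 < a).
Proof. exists (mkposreal 1 Rlt_0_1). intros; auto. Qed.

Lemma Gamma_gf x : Gamma x = RInt_gen (gf x) (at_right 0) (Rbar_locally p_infty).
Proof. reflexivity. Qed.

Lemma Gamma_is x : 0 < x ->
  is_RInt_gen (gf x) (at_right 0) (Rbar_locally p_infty) (Gamma x) /\ 0 < Gamma x.
Proof.
  intros Hx.
  destruct (lower_lim x Hx) as [l1 H1]. destruct (upper_lim x) as [l2 H2].
  assert (G1 : is_RInt_gen (gf x) (at_right 0) (at_point 1) l1).
  { apply lower_gen; auto; try lra. intros; apply gf_exRInt; lra. }
  assert (G2 : is_RInt_gen (gf x) (at_point 1) (Rbar_locally p_infty) l2).
  { apply upper_gen; auto. intros; apply gf_exRInt; lra. }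
  pose proof (is_RInt_gen_Chasles (gf x) 1 l1 l2 G1 G2) as G.
  assert (E : Gamma x = plus l1 l2).
  { rewrite Gamma_gf. apply (is_RInt_gen_unique (gf x)); auto. }
  rewrite E. split; auto.
  assert (L1 : 0 <= l1).
  { apply (lim_ge (fun a => RInt (gf x) a 1) l1 0 H1).
    apply (filter_imp (fun a => 0 < a < 1)).
    - intros a Ha. apply RInt_ge_0; try lra. apply gf_exRInt; lra. intros; left; apply gf_pos.
    - exists (mkposreal 1 Rlt_0_1). intros y Hy Hy0. simpl in Hy.
      change (Rabs (y - 0) < 1) in Hy. rewrite Rminus_0_r, Rabs_pos_eq in Hy by lra. lra. }
  assert (P12 : 0 < RInt (gf x) 1 2).
  { apply RInt_gt_0; try lra. intros; apply gf_pos. intros; apply gf_cont; lra. }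
  assert (L2 : RInt (gf x) 1 2 <= l2).
  { apply (lim_ge (fun b => RInt (gf x) 1 b) l2 _ H2).
    exists 2. intros b Hb.
    rewrite <- (Chasles_R (gf x) 1 2 b) by (apply gf_exRInt; lra).
    assert (0 <= RInt (gf x) 2 b).
    { apply RInt_ge_0; try lra. apply gf_exRInt; lra. intros; left; apply gf_pos. }
    lra. }
  rewrite Rplus_plus. lra.
Qed.


Definition HH (x t : R) := - (Rpower t x * exp (- t)).

Lemma HH_derive x t : 0 < t -> is_derive (HH x) t (gf (x + 1) t - x * gf x t).
Proof.
  intros Ht. unfold HH, gf. replace (x + 1 - 1) with x by ring.
  rewrite (Rpower_m1 t x Ht).
  unfold Rpower. auto_derive; [lra|]. field. lra.
Qed.

Lemma HH_Derive x t : 0 < t -> Derive (HH x) t = gf (x + 1) t - x * gf x t.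
Proof. intros. apply is_derive_unique, HH_derive; auto. Qed.

Lemma abs_HH x t : 0 < t -> Rabs (HH x t) = Rpower t x * exp (- t).
Proof.
  intros. unfold HH. rewrite Rabs_Ropp, Rabs_pos_eq; auto.
  left; apply Rmult_lt_0_compat; [apply Rpower_pos | apply exp_pos].
Qed.

Lemma HH_lim0 x : 0 < x -> filterlim (HH x) (at_right 0) (locally 0).
Proof.
  intros Hx. apply filterlim_locally. intros eps. pose proof (cond_pos eps).
  assert (Hd : 0 < Rmin 1 (Rpower eps (/ x))).
  { apply Rmin_glb_lt; [lra | apply Rpower_pos]. }
  exists (mkposreal _ Hd). intros y Hy Hy0. simpl in Hy.
  change (Rabs (y - 0) < Rmin 1 (Rpower eps (/ x))) in Hy.
  rewrite Rminus_0_r, Rabs_pos_eq in Hy by lra.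
  pose proof (Rmin_r 1 (Rpower eps (/ x))).
  change (Rabs (HH x y - 0) < eps). rewrite Rminus_0_r, abs_HH by auto.
  assert (H2 : Rpower y x < Rpower (Rpower eps (/ x)) x).
  { apply Rlt_Rpower_l; auto. lra. }
  rewrite Rpower_mult in H2. replace (/ x * x) with 1 in H2 by (field; lra).
  rewrite Rpower_1 in H2 by lra.
  assert (exp (- y) <= 1) by (rewrite <- exp_0; apply exp_le_mono; lra).
  pose proof (Rpower_pos y x). pose proof (exp_pos (- y)). nra.
Qed.

Lemma HH_liminf x : filterlim (HH x) (Rbar_locally p_infty) (locally 0).
Proof.
  apply filterlim_locally. intros eps. pose proof (cond_pos eps) as He.
  set (C := Cst x). assert (HC : 0 < C) by apply Cst_pos.
  exists (Rmax 1 (-2 * ln (eps / C))). intros b Hb.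
  pose proof (Rmax_l 1 (-2 * ln (eps / C))).
  pose proof (Rmax_r 1 (-2 * ln (eps / C))).
  change (Rabs (HH x b - 0) < eps). rewrite Rminus_0_r, abs_HH by lra.
  pose proof (bound_inf x b ltac:(lra)) as H2.
  assert (H3 : exp (- b / 2) < eps / C).
  { rewrite <- (exp_ln (eps / C)) by (apply Rdiv_lt_0_compat; lra).
    apply exp_increasing. lra. }
  apply Rmult_lt_compat_l with (r := C) in H3; [|lra].
  replace (C * (eps / C)) with (pos eps) in H3 by (field; lra). fold C in H2. lra.
Qed.

Lemma Gamma_succ x : 0 < x -> Gamma (x + 1) = x * Gamma x.
Proof.
  intros Hx. destruct (Gamma_is x Hx) as [G _].
  assert (D : is_RInt_gen (Derive (HH x)) (at_right 0) (Rbar_locally p_infty) (0 - 0)).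
  { apply is_RInt_gen_Derive.
    - apply Filter_prod with (Q := fun a => 0 < a) (R := fun b => 0 < b).
      apply at_right_pos. exists 0; auto.
      intros a b Ha Hb t Ht. simpl in Ht.
      assert (0 < Rmin a b) by (apply Rmin_glb_lt; auto).
      eexists; apply HH_derive; lra.
    - apply Filter_prod with (Q := fun a => 0 < a) (R := fun b => 0 < b).
      apply at_right_pos. exists 0; auto.
      intros a b Ha Hb t Ht. simpl in Ht.
      assert (0 < Rmin a b) by (apply Rmin_glb_lt; auto).
      assert (Ht0 : 0 < t) by lra.
      apply (continuous_ext_loc _ (fun t => gf (x + 1) t - x * gf x t)).
      + assert (Hd : 0 < t / 2) by lra. exists (mkposreal _ Hd). intros y Hy.
        change (Rabs (y - t) < t / 2) in Hy. apply Rabs_def2 in Hy.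
        rewrite HH_Derive; auto. lra.
      + apply (continuous_minus (K:=R_AbsRing) (V:=R_NormedModule)).
        apply gf_cont; auto.
        apply (continuous_scal_r (K:=R_AbsRing) (V:=R_NormedModule) x (gf x)). apply gf_cont; auto.
    - apply HH_lim0; auto.
    - apply HH_liminf. }
  pose proof (is_RInt_gen_plus _ _ _ _ D (is_RInt_gen_scal _ x _ G)) as S.
  assert (S' : is_RInt_gen (gf (x + 1)) (at_right 0) (Rbar_locally p_infty) (plus (0 - 0) (scal x (Gamma x)))).
  { apply (is_RInt_gen_ext (fun y => plus (Derive (HH x) y) (scal x (gf x y)))); auto.
    apply Filter_prod with (Q := fun a => 0 < a) (R := fun b => 0 < b).
    apply at_right_pos. exists 0; auto.
    intros a b Ha Hb t Ht. simpl in Ht.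
    assert (0 < Rmin a b) by (apply Rmin_glb_lt; auto).
    rewrite HH_Derive by lra. unfold plus, scal; simpl. unfold mult; simpl. ring. }
  rewrite (Gamma_gf (x + 1)), (is_RInt_gen_unique _ _ S'). unfold plus, scal; simpl. unfold mult; simpl. ring.
Qed.


Lemma gf_sq x y t : gf ((x + y) / 2) t ^ 2 = gf x t * gf y t.
Proof.
  unfold gf, Rpower. simpl. rewrite Rmult_1_r.
  rewrite <- !exp_plus. f_equal. field.
Qed.

Lemma amgm A B s l : 0 < A -> 0 < l -> s ^ 2 = A * B -> 2 * s <= l * A + B / l.
Proof.
  intros HA Hl Hs.
  assert (0 <= (l * A - s) ^ 2) by (apply pow2_ge_0).
  assert (H2 : 2 * s * (l * A) <= (l * A + B / l) * (l * A)).
  { replace ((l * A + B / l) * (l * A)) with ((l * A) ^ 2 + A * B) by (field; lra).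
    rewrite <- Hs. nra. }
  apply Rmult_le_reg_r with (l * A); auto. nra.
Qed.

Lemma Gamma_mid_aux x y l : 0 < x -> 0 < y -> 0 < l ->
  2 * Gamma ((x + y) / 2) <= l * Gamma x + Gamma y / l.
Proof.
  intros Hx Hy Hl.
  destruct (Gamma_is x Hx) as [Gx _]. destruct (Gamma_is y Hy) as [Gy _].
  destruct (Gamma_is ((x + y) / 2) ltac:(lra)) as [Gm _].
  pose proof (is_RInt_gen_scal _ 2 _ Gm) as F.
  pose proof (is_RInt_gen_plus _ _ _ _ (is_RInt_gen_scal _ l _ Gx) (is_RInt_gen_scal _ (/ l) _ Gy)) as G.
  assert (N : norm (scal 2 (Gamma ((x + y) / 2))) <= plus (scal l (Gamma x)) (scal (/ l) (Gamma y))).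
  { apply (RInt_gen_norm (Fa := at_right 0) (Fb := Rbar_locally p_infty) (fun t => scal 2 (gf ((x + y) / 2) t))
      (fun t => plus (scal l (gf x t)) (scal (/ l) (gf y t)))); [ | | exact F | exact G].
    - apply Filter_prod with (Q := fun a => 0 < a < 1) (R := fun b => 1 < b).
      + exists (mkposreal 1 Rlt_0_1); intros z Hz Hz0; simpl in Hz.
        change (Rabs (z - 0) < 1) in Hz; rewrite Rminus_0_r, Rabs_pos_eq in Hz by lra; lra.
      + exists 1; auto.
      + intros a b Ha Hb; simpl; lra.
    - apply Filter_prod with (Q := fun a => 0 < a) (R := fun b => True).
      + apply at_right_pos.
      + exists 0; auto.
      + intros a b Ha _ t Ht; simpl in Ht.
        change (Rabs (2 * gf ((x + y) / 2) t) <= l * gf x t + / l * gf y t).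
        rewrite Rabs_pos_eq by (pose proof (gf_pos ((x + y) / 2) t); lra).
        pose proof (amgm (gf x t) (gf y t) (gf ((x + y) / 2) t) l (gf_pos x t) Hl (gf_sq x y t)).
        unfold Rdiv in *; lra. }
  change (Rabs (2 * Gamma ((x + y) / 2)) <= l * Gamma x + / l * Gamma y) in N.
  pose proof (Rle_abs (2 * Gamma ((x + y) / 2))). unfold Rdiv. lra.
Qed.

Lemma Gamma_mid x y : 0 < x -> 0 < y -> Gamma ((x + y) / 2) ^ 2 <= Gamma x * Gamma y.
Proof.
  intros Hx Hy.
  destruct (Gamma_is x Hx) as [_ Px]. destruct (Gamma_is y Hy) as [_ Py].
  destruct (Gamma_is ((x + y) / 2) ltac:(lra)) as [_ Pm].
  set (l := sqrt (Gamma y / Gamma x)).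
  assert (Hq : 0 < Gamma y / Gamma x) by (apply Rdiv_lt_0_compat; auto).
  assert (Hl : 0 < l) by (apply sqrt_lt_R0; auto).
  assert (Hl2 : l * l = Gamma y / Gamma x) by (apply sqrt_sqrt; lra).
  pose proof (Gamma_mid_aux x y l Hx Hy Hl) as H.
  assert (E : l * Gamma x = Gamma y / l).
  { apply Rmult_eq_reg_r with l; [|lra].
    replace (Gamma y / l * l) with (Gamma y) by (field; lra).
    replace (l * Gamma x * l) with ((l * l) * Gamma x) by ring. rewrite Hl2. field. lra. }
  rewrite E in H.
  assert (H2 : Gamma ((x + y) / 2) * l <= Gamma y).
  { apply Rmult_le_reg_r with (/ l). apply Rinv_0_lt_compat; auto.
    rewrite Rmult_assoc, Rinv_r by lra. unfold Rdiv in H. lra. }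
  assert (H3 : (Gamma ((x + y) / 2) * l) ^ 2 <= Gamma y ^ 2).
  { apply pow_incr. split; auto. left; apply Rmult_lt_0_compat; auto. }
  replace ((Gamma ((x + y) / 2) * l) ^ 2) with (Gamma ((x + y) / 2) ^ 2 * (Gamma y / Gamma x)) in H3
    by (rewrite <- Hl2; ring).
  apply Rmult_le_reg_r with (Gamma y / Gamma x); auto.
  replace (Gamma x * Gamma y * (Gamma y / Gamma x)) with (Gamma y ^ 2) by (field; lra). lra.
Qed.


Lemma Gamma_pos z : 0 < z -> 0 < Gamma z.
Proof. intros; apply Gamma_is; auto. Qed.

Definition phi z := ln (Gamma z) - ln (Gamma (z + 1 / 2)).
Definition gg z := ln (2 * z + 1) - ln 2 - ln z.
Definition Phi z := - ln z - (2 * z - 1) * gg z - 2 * phi z.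
Definition dd z := ln (z + 1) - ln z - (2 * z + 1) * (ln (2 * z + 1) + ln (z + 1) - ln z - ln (2 * z + 3)).

Lemma ln_half z : 0 < z -> ln (z + 1 / 2) = ln (2 * z + 1) - ln 2.
Proof.
  intros. replace (z + 1 / 2) with ((2 * z + 1) / 2) by field.
  apply ln_div; lra.
Qed.

Lemma Phi_step z : 0 < z -> Phi z - Phi (z + 1) = dd z.
Proof.
  intros Hz.
  assert (G1 : Gamma (z + 1) = z * Gamma z) by (apply Gamma_succ; auto).
  assert (G2 : Gamma (z + 1 + 1 / 2) = (z + 1 / 2) * Gamma (z + 1 / 2)).
  { replace (z + 1 + 1 / 2) with ((z + 1 / 2) + 1) by ring. apply Gamma_succ; lra. }
  pose proof (Gamma_pos z Hz). pose proof (Gamma_pos (z + 1 / 2) ltac:(lra)).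
  unfold Phi, phi, dd, gg. rewrite G1, G2, !ln_mult by lra.
  rewrite ln_half by auto.
  replace (2 * (z + 1) + 1) with (2 * z + 3) by ring.
  ring.
Qed.

Definition ddd z := 2 / ((2 * z + 3) * (z + 1)) - 2 * (ln (2 * z + 1) + ln (z + 1) - ln z - ln (2 * z + 3)).

Lemma dd_derive z : 0 < z -> is_derive dd z (ddd z).
Proof.
  intros Hz. unfold dd, ddd. auto_derive.
  - repeat split; lra.
  - field. repeat split; lra.
Qed.

Lemma ddd_neg c : 0 < c -> ddd c < 0.
Proof.
  intros Hc. unfold ddd.
  set (w := c * (2 * c + 3) / ((2 * c + 1) * (c + 1))).
  assert (Hw : 0 < w) by (unfold w; apply Rdiv_lt_0_compat; nra).
  pose proof (ln_le_sub1 w Hw) as H.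
  assert (E : ln w = ln c + ln (2 * c + 3) - ln (2 * c + 1) - ln (c + 1)).
  { unfold w. rewrite ln_div, !ln_mult by nra. ring. }
  assert (E2 : w - 1 = - (1 / ((2 * c + 1) * (c + 1)))) by (unfold w; field; lra).
  assert (I : 1 / ((2 * c + 3) * (c + 1)) < 1 / ((2 * c + 1) * (c + 1))).
  { unfold Rdiv; rewrite !Rmult_1_l. apply Rinv_lt_contravar; nra. }
  unfold Rdiv in *. lra.
Qed.

Lemma dd_decr a b : 0 < a -> a < b -> dd b < dd a.
Proof.
  intros Ha Hab.
  destruct (MVT_gen dd a b ddd) as [c [Hc E]].
  - intros x Hx. rewrite Rmin_left, Rmax_right in Hx by lra. apply dd_derive; lra.
  - intros x Hx. rewrite Rmin_left, Rmax_right in Hx by lra.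
    apply continuity_pt_filterlim. apply (ex_derive_continuous (K:=R_AbsRing) (V:=R_NormedModule)).
    eexists; apply dd_derive; lra.
  - rewrite Rmin_left, Rmax_right in Hc by lra.
    pose proof (ddd_neg c ltac:(lra)). nra.
Qed.


Lemma ln_sq_le a b c : 0 < a -> 0 < b -> 0 < c -> a ^ 2 <= b * c -> 2 * ln a <= ln b + ln c.
Proof.
  intros Ha Hb Hc H. rewrite <- ln_mult by auto.
  replace (2 * ln a) with (ln (a ^ 2)) by (rewrite ln_pow by auto; simpl; ring).
  apply ln_le; auto. apply pow_lt; auto.
Qed.

Lemma Gamma_b1 z : 0 < z -> 2 * ln (Gamma (z + 1 / 2)) <= ln z + 2 * ln (Gamma z).
Proof.
  intros Hz. pose proof (Gamma_mid z (z + 1) Hz ltac:(lra)) as H.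
  replace ((z + (z + 1)) / 2) with (z + 1 / 2) in H by field.
  rewrite Gamma_succ in H by auto.
  pose proof (Gamma_pos z Hz) as P1. pose proof (Gamma_pos (z + 1 / 2) ltac:(lra)) as P2.
  assert (H' : Gamma (z + 1 / 2) ^ 2 <= z * Gamma z * Gamma z) by lra.
  assert (P3 : 0 < z * Gamma z) by nra.
  pose proof (ln_sq_le _ _ _ P2 P3 P1 H') as H2.
  rewrite ln_mult in H2 by auto. lra.
Qed.

Lemma Gamma_b2 z : 0 < z -> 2 * ln z + 2 * ln (Gamma z) <= ln (z + 1 / 2) + 2 * ln (Gamma (z + 1 / 2)).
Proof.
  intros Hz. pose proof (Gamma_mid (z + 1 / 2) (z + 1 / 2 + 1) ltac:(lra) ltac:(lra)) as H.
  replace ((z + 1 / 2 + (z + 1 / 2 + 1)) / 2) with (z + 1) in H by field.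
  rewrite !Gamma_succ in H by lra.
  pose proof (Gamma_pos z Hz) as P1. pose proof (Gamma_pos (z + 1 / 2) ltac:(lra)) as P2.
  assert (H' : (z * Gamma z) ^ 2 <= (z + 1 / 2) * Gamma (z + 1 / 2) * Gamma (z + 1 / 2)) by lra.
  assert (P3 : 0 < z * Gamma z) by nra.
  assert (P4 : 0 < (z + 1 / 2) * Gamma (z + 1 / 2)) by nra.
  pose proof (ln_sq_le _ _ _ P3 P4 P2 H') as H2.
  rewrite !ln_mult in H2 by nra. lra.
Qed.

Lemma gg_upper z : 0 < z -> 2 * z * gg z <= 1.
Proof.
  intros Hz. unfold gg.
  assert (E : ln (2 * z + 1) - ln 2 - ln z = ln ((2 * z + 1) / (2 * z))).
  { rewrite ln_div, ln_mult by lra. ring. }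
  rewrite E. pose proof (ln_le_sub1 ((2 * z + 1) / (2 * z)) ltac:(apply Rdiv_lt_0_compat; lra)).
  replace ((2 * z + 1) / (2 * z) - 1) with (/ (2 * z)) in H by (field; lra).
  apply Rmult_le_compat_l with (r := 2 * z) in H; [|lra].
  rewrite Rinv_r in H by lra. lra.
Qed.

Lemma gg_lower z : 0 < z -> 1 / (2 * z + 1) <= gg z.
Proof.
  intros Hz. unfold gg.
  assert (E : ln (2 * z + 1) - ln 2 - ln z = - ln ((2 * z) / (2 * z + 1))).
  { rewrite ln_div, ln_mult by lra. ring. }
  rewrite E. pose proof (ln_le_sub1 ((2 * z) / (2 * z + 1)) ltac:(apply Rdiv_lt_0_compat; lra)).
  replace ((2 * z) / (2 * z + 1) - 1) with (- (1 / (2 * z + 1))) in H by (field; lra).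
  lra.
Qed.

Lemma Phi_tail z1 z2 : 0 < z1 -> z1 < z2 -> 1 / 2 <= z2 -> - (2 / (2 * z2 + 1)) <= Phi z1 - Phi z2.
Proof.
  intros H1 H12 H2.
  pose proof (Gamma_b2 z1 H1). pose proof (Gamma_b1 z2 ltac:(lra)).
  pose proof (gg_upper z1 H1). pose proof (gg_lower z2 ltac:(lra)).
  assert (E : Phi z1 - Phi z2 >= - 2 * z1 * gg z1 + (2 * z2 - 1) * gg z2).
  { unfold Phi, phi. rewrite ln_half in H by auto. unfold gg in *. lra. }
  assert (F : (2 * z2 - 1) * (1 / (2 * z2 + 1)) <= (2 * z2 - 1) * gg z2).
  { apply Rmult_le_compat_l; lra. }
  replace ((2 * z2 - 1) * (1 / (2 * z2 + 1))) with (1 - 2 / (2 * z2 + 1)) in F by (field; lra).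
  lra.
Qed.

Lemma Phi_decr x1 x2 : 0 < x1 -> x1 < x2 -> Phi x2 < Phi x1.
Proof.
  intros H1 H12.
  set (delta := dd x1 - dd x2).
  assert (Hd : 0 < delta) by (unfold delta; pose proof (dd_decr x1 x2 H1 H12); lra).
  assert (Ind : forall n, Phi x1 - Phi x2 >= delta + (Phi (x1 + INR (S n)) - Phi (x2 + INR (S n)))).
  { induction n.
    - simpl. pose proof (Phi_step x1 H1). pose proof (Phi_step x2 ltac:(lra)).
      unfold delta. lra.
    - rewrite S_INR with (n := S n).
      pose proof (pos_INR (S n)).
      pose proof (Phi_step (x1 + INR (S n)) ltac:(lra)).
      pose proof (Phi_step (x2 + INR (S n)) ltac:(lra)).
      pose proof (dd_decr (x1 + INR (S n)) (x2 + INR (S n)) ltac:(lra) ltac:(lra)).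
      rewrite !Rplus_assoc in *. lra. }
  destruct (archimed_cor1 delta Hd) as [N [HN HN0]].
  pose proof (Ind N) as I.
  assert (HSN : INR (S N) = INR N + 1) by apply S_INR.
  assert (HNpos : 0 < INR N) by (apply lt_0_INR; auto).
  pose proof (Phi_tail (x1 + INR (S N)) (x2 + INR (S N)) ltac:(lra) ltac:(lra) ltac:(lra)) as T.
  assert (B : 2 / (2 * (x2 + INR (S N)) + 1) < / INR N).
  { rewrite HSN. set (A := 2 * (x2 + (INR N + 1)) + 1).
    assert (HA : 2 * INR N < A) by (unfold A; lra).
    assert (/ A < / (2 * INR N)) by (apply Rinv_lt_contravar; nra).
    replace (/ INR N) with (2 * / (2 * INR N)) by (field; lra).
    unfold Rdiv. lra. }
  lra.
Qed.


Lemma ln_prod5 a1 b1 a2 b2 a3 b3 a4 b4 a5 b5 :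
  ln (Rpower a1 b1 * Rpower a2 b2 * Rpower a3 b3 * Rpower a4 b4 * Rpower a5 b5)
  = b1 * ln a1 + b2 * ln a2 + b3 * ln a3 + b4 * ln a4 + b5 * ln a5.
Proof. unfold Rpower. rewrite <- !exp_plus, ln_exp. ring. Qed.

Lemma K_pos t p L : 0 < KstarCKN t p L.
Proof. unfold KstarCKN. repeat apply Rmult_lt_0_compat; apply Rpower_pos. Qed.

Lemma lnD s : 0 < s -> ln (sqrt PI * Gamma s / Gamma (s + 1 / 2)) = ln (sqrt PI) + ln (Gamma s) - ln (Gamma (s + 1 / 2)).
Proof.
  intros Hs. pose proof (Gamma_pos s Hs). pose proof (Gamma_pos (s + 1 / 2) ltac:(lra)).
  assert (0 < sqrt PI) by (apply sqrt_lt_R0, PI_RGT_0).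
  rewrite ln_div, ln_mult; auto. apply Rmult_lt_0_compat; auto.
Qed.

Lemma N_formula p x : 2 < p -> 0 < x ->
  Nfun ((p - 2) * (x + 1) / p) p = exp ((Phi x - Phi (2 / (p - 2))) / (2 * (x + 1))).
Proof.
  intros Hp Hx.
  unfold Nfun.
  pose proof (K_pos ((p - 2) * (x + 1) / p) p 1) as K1.
  pose proof (K_pos 1 (qstar ((p - 2) * (x + 1) / p) p) 1) as K2.
  unfold Rpower at 1. rewrite <- (exp_ln _ K2). unfold Rdiv at 1. rewrite <- exp_Ropp, <- exp_plus.
  f_equal.
  replace (qstar ((p - 2) * (x + 1) / p) p) with (2 * (x + 1) / x)
    by (unfold qstar; replace (2 - p * (1 - (p - 2) * (x + 1) / p)) with ((p - 2) * x) by (field; lra);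
        field; split; lra).
  unfold KstarCKN. rewrite !ln_prod5.
  replace ((2 * p * ((p - 2) * (x + 1) / p) + 2 - p) / (p - 2) ^ 2) with ((2 * x + 1) / (p - 2))
    by (field; repeat split; nra).
  replace (2 * p * ((p - 2) * (x + 1) / p) / (2 * p * ((p - 2) * (x + 1) / p) + 2 - p))
    with (2 * (x + 1) / (2 * x + 1)) by (field; repeat split; nra).
  replace ((2 * (2 * (x + 1) / x) * 1 + 2 - 2 * (x + 1) / x) / (2 * (x + 1) / x - 2) ^ 2)
    with (x * (2 * x + 1) / 2) by (field; repeat split; nra).
  replace (2 * (2 * (x + 1) / x) * 1 / (2 * (2 * (x + 1) / x) * 1 + 2 - 2 * (x + 1) / x))
    with (2 * (x + 1) / (2 * x + 1)) by (field; repeat split; nra).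
  replace ((2 * (x + 1) / x + 2) / 4) with ((2 * x + 1) / (2 * x)) by (field; repeat split; nra).
  replace (2 / (2 * (x + 1) / x - 2)) with x by (field; repeat split; nra).
  assert (Hx0 : 0 < 2 / (p - 2)) by (apply Rdiv_lt_0_compat; lra).
  rewrite !lnD, ln_1 by auto.
  rewrite (ln_div (2 * x + 1) (p - 2)) by lra.
  rewrite (ln_div (x * (2 * x + 1)) 2), ln_mult by nra.
  rewrite (ln_div (2 * x + 1) (2 * x)), (ln_mult 2 x) by nra.
  rewrite (ln_div (p + 2) 4) by lra.
  replace 4 with (2 * 2) by ring. rewrite (ln_mult 2 2) by lra.
  unfold Phi, phi, gg.
  replace (2 * (2 / (p - 2)) + 1) with ((p + 2) / (p - 2)) by (field; lra).
  rewrite (ln_div (p + 2) (p - 2)), (ln_div 2 (p - 2)) by lra.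
  field. repeat split; nra.
Qed.


Theorem lemma4 (p : R) (hp2 : 2 < p) (hp6 : p < 6) :
  Nfun 1 p = 1 /\
  (forall theta1 theta2 : R,
     vartheta2 p < theta1 -> theta1 < theta2 -> theta2 <= 1 ->
     Nfun theta2 p < Nfun theta1 p).
Proof.
  split.
  - unfold Nfun. replace (qstar 1 p) with p by (unfold qstar; field; lra).
    replace (1 / 1) with 1 by field. rewrite Rpower_1 by apply K_pos.
    pose proof (K_pos 1 p 1). field. lra.
  - intros t1 t2 H1 H12 H2. unfold vartheta2 in H1.
    set (x1 := (p * t1 - (p - 2)) / (p - 2)).
    set (x2 := (p * t2 - (p - 2)) / (p - 2)).
    set (x0 := 2 / (p - 2)).
    assert (Hpt1 : p - 2 < p * t1).
    { apply Rmult_lt_compat_l with (r := p) in H1; [|lra].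
      replace (p * ((p - 2) / p)) with (p - 2) in H1 by (field; lra). lra. }
    assert (Hx1 : 0 < x1) by (unfold x1; apply Rdiv_lt_0_compat; lra).
    assert (Hx12 : x1 < x2).
    { unfold x1, x2, Rdiv. apply Rmult_lt_compat_r. apply Rinv_0_lt_compat; lra. nra. }
    assert (Hx20 : x2 <= x0).
    { unfold x2, x0, Rdiv. apply Rmult_le_compat_r. left; apply Rinv_0_lt_compat; lra. nra. }
    assert (E1 : t1 = (p - 2) * (x1 + 1) / p) by (unfold x1; field; lra).
    assert (E2 : t2 = (p - 2) * (x2 + 1) / p) by (unfold x2; field; lra).
    rewrite E1, E2, !N_formula by lra. fold x0.
    apply exp_increasing.
    assert (P12 : Phi x2 < Phi x1) by (apply Phi_decr; auto).
    assert (P20 : Phi x0 <= Phi x2).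
    { destruct Hx20 as [h|h]. left; apply Phi_decr; lra. rewrite h; lra. }
    set (A := Phi x1 - Phi x0). set (B := Phi x2 - Phi x0).
    unfold Rdiv.
    assert (I1 : / (2 * (x2 + 1)) <= / (2 * (x1 + 1))).
    { apply Rinv_le_contravar; lra. }
    assert (I2 : 0 < / (2 * (x1 + 1))) by (apply Rinv_0_lt_compat; lra).
    assert (B * / (2 * (x2 + 1)) <= B * / (2 * (x1 + 1))).
    { apply Rmult_le_compat_l; unfold B; lra. }
    assert (B * / (2 * (x1 + 1)) < A * / (2 * (x1 + 1))).
    { apply Rmult_lt_compat_r; unfold A, B; lra. }
    lra.
Qed.
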